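(* Let $(X,\tau,I)$ be a $*$-extremally disconnected ideal topological space and $\gamma$ an operation on $\tau$ such that $(X,\tau)$ is $\gamma$-regular. For $V\subseteq X$ the following are equivalent: (1) $V$ is $\gamma$-open; (2) $V$ is $\alpha$-$I$-open and locally closed; (3) $V$ is pre-$\gamma$-$I$-open and locally closed; (4) $V$ is pre-$I$-open and locally closed; (5) $V$ is semi-$I$-open and locally closed; (6) $V$ is $b$-$I$-open and locally closed.
   Context: Let $(X,\tau)$ be a topological space; $Cl$ and $Int$ denote closure and interior in $\tau$. An ideal on $X$ is a nonempty family $I$ of subsets of $X$ such that $A\in I$, $B\subseteq A$ imply $B\in I$, and $A,B\in I$ imply $A\cup B\in I$; $(X,\tau,I)$ is then called an ideal topological space. An operation on $\tau$ is a map $\gamma:\tau\to P(X)$ with $V\subseteq\gamma(V)$ for all $V\in\tau$. A subset $A\subseteq X$ is $\gamma$-open if for every $x\in A$ there is $U\in\tau$ with $x\in U$ and $\gamma(U)\subseteq A$; $\tau_\gamma$ denotes the family of $\gamma$-open sets (so $\tau_\gamma\subseteq\tau$), and complements of $\gamma$-open sets are $\gamma$-closed. $\tau_\gamma\text{-}Int(A)$ is the union of all $\gamma$-open sets contained in $A$, and $\tau_\gamma\text{-}Cl(A)$ is the intersection of all $\gamma$-closed sets containing $A$. The local function of $A$ is $A^*=\{x\in X: U\cap A\notin I \text{ for every } U\in\tau \text{ with } x\in U\}$, and $Cl^*(A)=A\cup A^*$ (the closure operator of a topology $\tau^*$ finer than $\tau$). A subset $A$ is pre-$\gamma$-$I$-open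 if $A\subseteq \tau_\gamma\text{-}Int(Cl^*(A))$. The space $(X,\tau)$ is $\gamma$-regular if for each $x\in X$ and each open $V$ containing $x$ there is an open $U$ containing $x$ with $\gamma(U)\subseteq V$ (equivalently, $\tau_\gamma=\tau$). $(X,\tau,I)$ is $*$-extremally disconnected if $Cl^*(V)$ is open for every open $V\subseteq X$ (equivalently, $Cl^*(Int(V))\subseteq Int(Cl^*(V))$ for every $V\subseteq X$). A set $A$ is: $\alpha$-$I$-open if $A\subseteq Int(Cl^*(Int(A)))$; pre-$I$-open if $A\subseteq Int(Cl^*(A))$; semi-$I$-open if $A\subseteq Cl^*(Int(A))$; $b$-$I$-open if $A\subseteq Int(Cl^*(A))\cup Cl^*(Int(A))$; locally closed if $A=U\cap K$ for some open $U$ and some closed $K$ in $(X,\tau)$. *)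

(* Defs.v *)
From Stdlib Require Import Classical.

Section Defs.
Variable X : Type.
Definition set := X -> Prop.

Definition subset (A B : set) : Prop := forall x, A x -> B x.
Definition set_eq (A B : set) : Prop := forall x, A x <-> B x.
Definition inter (A B : set) : set := fun x => A x /\ B x.
Definition union (A B : set) : set := fun x => A x \/ B x.
Definition compl (A : set) : set := fun x => ~ A x.
Definition empty : set := fun _ => False.
Definition full : set := fun _ => True.

Definition is_topology (tau : set -> Prop) : Prop :=
  tau empty /\ tau full /\
  (forall F : set -> Prop, (forall U, F U -> tau U) ->
      tau (fun x => exists U, F U /\ U x)) /\
  (forall U V, tau U -> tau V -> tau (inter U V)).

Definition is_ideal (I : set -> Prop) : Prop :=
  (exists A, I A) /\
  (forall A B, I A -> subset B A -> I B) /\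
  (forall A B, I A -> I B -> I (union A B)).

Definition is_operation (tau : set -> Prop) (gamma : set -> set) : Prop :=
  forall V, tau V -> subset V (gamma V).

Definition is_closed (tau : set -> Prop) (K : set) : Prop := tau (compl K).

Definition Int (tau : set -> Prop) (A : set) : set :=
  fun x => exists U, tau U /\ subset U A /\ U x.
Definition Cl (tau : set -> Prop) (A : set) : set :=
  fun x => forall K, is_closed tau K -> subset A K -> K x.

Definition gamma_open (tau : set -> Prop) (gamma : set -> set) (A : set) : Prop :=
  forall x, A x -> exists U, tau U /\ U x /\ subset (gamma U) A.

Definition gamma_Int (tau : set -> Prop) (gamma : set -> set) (A : set) : set :=
  fun x => exists U, gamma_open tau gamma U /\ subset U A /\ U x.

Definition local_fun (tau : set -> Prop) (I : set -> Prop) (A : set) : set :=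
  fun x => forall U, tau U -> U x -> ~ I (inter U A).

Definition Clstar (tau : set -> Prop) (I : set -> Prop) (A : set) : set :=
  union A (local_fun tau I A).

Definition pre_gamma_I_open tau I gamma (A : set) : Prop :=
  subset A (gamma_Int tau gamma (Clstar tau I A)).

Definition gamma_regular (tau : set -> Prop) (gamma : set -> set) : Prop :=
  forall x V, tau V -> V x -> exists U, tau U /\ U x /\ subset (gamma U) V.

Definition star_extremally_disconnected (tau : set -> Prop) (I : set -> Prop) : Prop :=
  forall V, tau V -> tau (Clstar tau I V).

Definition alpha_I_open tau I (A : set) : Prop :=
  subset A (Int tau (Clstar tau I (Int tau A))).
Definition pre_I_open tau I (A : set) : Prop :=
  subset A (Int tau (Clstar tau I A)).
Definition semi_I_open tau I (A : set) : Prop :=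
  subset A (Clstar tau I (Int tau A)).
Definition b_I_open tau I (A : set) : Prop :=
  subset A (union (Int tau (Clstar tau I A)) (Clstar tau I (Int tau A))).

Definition locally_closed (tau : set -> Prop) (A : set) : Prop :=
  exists U K, tau U /\ is_closed tau K /\ set_eq A (inter U K).
End Defs.

Arguments subset {X}. Arguments set_eq {X}. Arguments inter {X}.
Arguments union {X}. Arguments compl {X}. Arguments empty {X}. Arguments full {X}.
Arguments is_topology {X}. Arguments is_ideal {X}. Arguments is_operation {X}.
Arguments is_closed {X}. Arguments Int {X}. Arguments Cl {X}.
Arguments gamma_open {X}. Arguments gamma_Int {X}. Arguments local_fun {X}.
Arguments Clstar {X}. Arguments pre_gamma_I_open {X}. Arguments gamma_regular {X}.
Arguments star_extremally_disconnected {X}. Arguments alpha_I_open {X}.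
Arguments pre_I_open {X}. Arguments semi_I_open {X}. Arguments b_I_open {X}.
Arguments locally_closed {X}.

(* Main.v *)
Require Import Defs.
From Stdlib Require Import Classical FunctionalExtensionality PropExtensionality.

Section H.
Variable X : Type.
Variable tau : set X -> Prop.
Variable I : set X -> Prop.
Hypothesis Htop : is_topology tau.
Hypothesis Hid : is_ideal I.

Lemma open_of_local (V : set X) :
  (forall x, V x -> exists U, tau U /\ U x /\ subset U V) -> tau V.
Proof.
  intros H. destruct Htop as (_ & _ & Hu & _).
  assert (E : (fun x => exists U, (fun U => tau U /\ subset U V) U /\ U x) = V).
  { apply functional_extensionality; intro x; apply propositional_extensionality.
    split.
    - intros (U & (_ & HU) & Ux). apply HU; exact Ux.
    - intros Vx. destruct (H x Vx) as (U & tU & Ux & sU). exists U; auto. }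
  rewrite <- E. apply Hu. intros U [tU _]; exact tU.
Qed.

Lemma clstar_mono (A B : set X) : subset A B -> subset (Clstar tau I A) (Clstar tau I B).
Proof.
  intros sAB x [Ax | Hx].
  - left; auto.
  - right. intros U tU Ux HI. apply (Hx U tU Ux).
    destruct Hid as (_ & Hh & _). apply (Hh _ _ HI).
    intros y [Uy Ay]; split; auto.
Qed.

Lemma clstar_closed (A K : set X) : is_closed tau K -> subset A K ->
  subset (Clstar tau I A) K.
Proof.
  intros cK sAK x [Ax | Hx]; [auto|].
  apply NNPP; intro nK. apply (Hx (compl K) cK nK).
  destruct Hid as ((B & IB) & Hh & _). apply (Hh _ _ IB).
  intros y [nKy Ay]. exfalso; apply nKy, sAK, Ay.
Qed.

Lemma pre_lc_open (V : set X) : pre_I_open tau I V -> locally_closed tau V -> tau V.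
Proof.
  intros Hp (U & K & tU & cK & E). apply open_of_local. intros x Vx.
  destruct (Hp x Vx) as (W & tW & sW & Wx).
  destruct Htop as (_ & _ & _ & Hi).
  exists (inter U W). split; [apply Hi; auto|]. split.
  - split; auto. apply (E x) in Vx. destruct Vx; auto.
  - intros y [Uy Wy]. apply (E y). split; auto.
    apply (clstar_closed V K cK); [|apply sW; auto].
    intros z Vz. apply (E z) in Vz. destruct Vz; auto.
Qed.

Lemma open_pre (V : set X) : tau V -> pre_I_open tau I V.
Proof. intros tV x Vx. exists V. split; [auto|]. split; [|auto]. intros y Vy; left; auto. Qed.

Lemma open_lc (V : set X) : tau V -> locally_closed tau V.
Proof.
  intros tV. exists V, full. split; auto. split.
  - unfold is_closed. destruct Htop as (He & _).
    replace (compl (@full X)) with (@empty X); auto.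
    apply functional_extensionality; intro x; apply propositional_extensionality.
    unfold compl, full, empty; tauto.
  - intro x; unfold inter, full; tauto.
Qed.

Lemma int_open (V : set X) : tau V -> subset V (Int tau V).
Proof. intros tV x Vx. exists V; repeat split; auto. intros y h; auto. Qed.

Lemma int_sub (A : set X) : subset (Int tau A) A.
Proof. intros x (U & _ & sU & Ux); auto. Qed.

Lemma int_mono (A B : set X) : subset A B -> subset (Int tau A) (Int tau B).
Proof. intros s x (U & tU & sU & Ux). exists U; repeat split; auto. intros y h; auto. Qed.

Lemma semi_pre (V : set X) : star_extremally_disconnected tau I ->
  subset (Clstar tau I (Int tau V)) (Int tau (Clstar tau I V)).
Proof.
  intros Hed x Hx. exists (Clstar tau I (Int tau V)). split.
  - apply Hed. apply open_of_local. intros y (U & tU & sU & Uy). exists U; repeat split; auto.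
    intros z Uz. exists U; auto.
  - split; auto. apply clstar_mono, int_sub.
Qed.
End H.

Theorem theorem3p35 (X : Type) (tau : set X -> Prop) (I : set X -> Prop)
  (gamma : set X -> set X)
  (Htop : is_topology tau) (Hid : is_ideal I) (Hop : is_operation tau gamma)
  (Hed : star_extremally_disconnected tau I) (Hreg : gamma_regular tau gamma)
  (V : set X) :
  (gamma_open tau gamma V <-> alpha_I_open tau I V /\ locally_closed tau V) /\
  (gamma_open tau gamma V <-> pre_gamma_I_open tau I gamma V /\ locally_closed tau V) /\
  (gamma_open tau gamma V <-> pre_I_open tau I V /\ locally_closed tau V) /\
  (gamma_open tau gamma V <-> semi_I_open tau I V /\ locally_closed tau V) /\
  (gamma_open tau gamma V <-> b_I_open tau I V /\ locally_closed tau V).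
Proof.
  assert (GO : forall A, gamma_open tau gamma A -> tau A).
  { intros A HA. apply open_of_local; auto. intros x Ax.
    destruct (HA x Ax) as (U & tU & Ux & sU). exists U; repeat split; auto.
    intros y Uy. apply sU, Hop; auto. }
  assert (OG : forall A, tau A -> gamma_open tau gamma A).
  { intros A tA x Ax. apply Hreg; auto. }
  assert (K : gamma_open tau gamma V <-> tau V) by (split; auto).
  assert (P : tau V <-> pre_I_open tau I V /\ locally_closed tau V).
  { split.
    - intros; split; [apply open_pre|apply open_lc]; auto.
    - intros [a b]; apply (pre_lc_open X tau I); auto. }
  rewrite K. split; [|split; [|split; [|split]]].
  - split.
    + intros tV. split; [|apply open_lc; auto].
      intros x Vx. apply (int_mono X tau (Clstar tau I V)).
      * apply clstar_mono; auto. apply int_open; auto.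
      * apply open_pre; auto.
    + intros [a b]. apply P. split; auto.
      intros x Vx. apply (int_mono X tau (Clstar tau I (Int tau V))).
      * apply clstar_mono; auto. apply int_sub.
      * apply a; auto.
  - split.
    + intros tV. split; [|apply open_lc; auto].
      intros x Vx. exists V. split; [apply OG; auto|]. split; auto.
      intros y Vy; left; auto.
    + intros [a b]. apply P. split; auto.
      intros x Vx. destruct (a x Vx) as (U & gU & sU & Ux). exists U; auto.
  - exact P.
  - split.
    + intros tV. split; [|apply open_lc; auto].
      intros x Vx. left. apply int_open; auto.
    + intros [a b]. apply P. split; auto.
      intros x Vx. apply semi_pre; auto.
  - split.
    + intros tV. split; [|apply open_lc; auto].
      intros x Vx. left. apply open_pre; auto.
    + intros [a b]. apply P. split; auto.
      intros x Vx. destruct (a x Vx) as [h|h]; auto. apply semi_pre; auto.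
Qed.
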